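(* Let $(X,\mathscr{R})$ be a closed mixed reaction network with $\mathscr{R}=\mathscr{R}_{\mathrm{rev}}\sqcup\mathscr{R}_{\mathrm{irr}}$ and stoichiometric matrix $S$. Then $(X,\mathscr{R})$ is thermodynamically sound if and only if there is no irreversible futile cycle.
   Context: A reaction network (RN) $(X,\mathscr{R})$ consists of a finite non-empty set $X$ of species and a finite non-empty set $\mathscr{R}$ of reactions. Each reaction $r$ is given by stoichiometric coefficients $s^-_{xr},s^+_{xr}\in\mathbb{N}_0$ ($x\in X$), written $\sum_x s^-_{xr}x\to\sum_x s^+_{xr}x$. The stoichiometric matrix $S\in\mathbb{Z}^{X\times\mathscr{R}}$ has entries $S_{xr}=s^+_{xr}-s^-_{xr}$. A reaction $r$ is proper if there are $x,y\in X$ with $S_{xr}<0<S_{yr}$, and the RN is closed if all its reactions are proper. The reverse $\bar r$ of a reaction $r$ has $s^-_{x\bar r}=s^+_{xr}$ and $s^+_{x\bar r}=s^-_{xr}$ for all $x$. A mixed RN has $\mathscr{R}=\mathscr{R}_{\mathrm{rev}}\sqcup\mathscr{R}_{\mathrm{irr}}$, where $r\in\mathscr{R}_{\mathrm{rev}}$ implies $\bar r\in\mathscr{R}_{\mathrm{rev}}$, and $r\in\mathscr{R}_{\mathrm{irr}}$ implies $\bar r\notin\mathscr{R}$. Vector notation for $v\in\mathbb{R}^{\mathscr{R}}$: - $v\ge0$ means all entries are non-negative. - $v>0$ means $v\ge 0$ and $v\ne0$. - $v\gg0$ means all entries are positive. A futile cycle is a vector $v>0$ with $Sv=0$. An irreversible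 futile cycle is a futile cycle with $\operatorname{supp}(v)\subseteq\mathscr{R}_{\mathrm{irr}}$. A vector of reaction energies is any $g\in\mathbb{R}^{\mathscr{R}}$. The triple $(X,\mathscr{R},g)$ is thermodynamic if $Sv=0$ implies $\langle g,v\rangle=0$ for all $v\in\mathbb{R}^{\mathscr{R}}$, i.e. $g\in(\ker S)^\perp$. The mixed RN is thermodynamically sound if there is $g$ such that $(X,\mathscr{R},g)$ is thermodynamic and $g_r<0$ for all $r\in\mathscr{R}_{\mathrm{irr}}$. *)

(* Defs.v *)
From mathcomp Require Import all_boot all_order all_algebra.
Set Implicit Arguments. Unset Strict Implicit. Unset Printing Implicit Defensive.
Import Order.TTheory GRing.Theory Num.Theory.
Local Open Scope ring_scope.

Section RN.
Variables (X Rn : finType).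
(* sm x r = s^-_{xr}, sp x r = s^+_{xr} *)
Variables (sm sp : X -> Rn -> nat).

Definition stoich (x : X) (r : Rn) : int := (sp x r)%:Z - (sm x r)%:Z.

(* reactions form a set: a reaction is determined by its coefficients *)
Definition reactions_distinct : Prop :=
  forall r r' : Rn, (forall x, sm x r = sm x r' /\ sp x r = sp x r') -> r = r'.

Definition reaction_network : Prop :=
  (0 < #|X|)%N /\ (0 < #|Rn|)%N /\ reactions_distinct.

Definition proper (r : Rn) : Prop :=
  exists x y, (stoich x r < 0)%R /\ (0 < stoich y r)%R.

Definition closed_RN : Prop := forall r, proper r.

Definition is_reverse (r r' : Rn) : Prop :=
  forall x, sm x r' = sp x r /\ sp x r' = sm x r.

(* mixed RN: R_irr = irr, R_rev = complement of irr *)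
Definition mixed_RN (irr : {set Rn}) : Prop :=
  (forall r, r \notin irr -> exists r', r' \notin irr /\ is_reverse r r') /\
  (forall r, r \in irr -> ~ exists r', is_reverse r r').

Variable R : realFieldType.

Definition in_kerS (v : Rn -> R) : Prop :=
  forall x, \sum_(r : Rn) (stoich x r)%:~R * v r = 0.

Definition vpos (v : Rn -> R) : Prop :=
  (forall r, 0 <= v r) /\ (exists r, v r != 0).

Definition futile_cycle (v : Rn -> R) : Prop := vpos v /\ in_kerS v.

Definition irreversible_futile_cycle (irr : {set Rn}) (v : Rn -> R) : Prop :=
  futile_cycle v /\ (forall r, v r != 0 -> r \in irr).

Definition thermodynamic (g : Rn -> R) : Prop :=
  forall v : Rn -> R, in_kerS v -> \sum_(r : Rn) g r * v r = 0.

Definition thermodynamically_sound (irr : {set Rn}) : Prop :=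
  exists g : Rn -> R, thermodynamic g /\ (forall r, r \in irr -> g r < 0).

End RN.

(* Main.v *)
Require Import Defs.
From mathcomp Require Import all_boot all_order all_algebra.
From mathcomp Require Import ring lra.
Set Implicit Arguments. Unset Strict Implicit. Unset Printing Implicit Defensive.
Import Order.TTheory GRing.Theory Num.Theory.
Local Open Scope ring_scope.

Definition dot (R : realFieldType) (X : finType) (u v : X -> R) := \sum_x u x * v x.

Lemma dotC (R : realFieldType) (X : finType) (u v : X -> R) : dot u v = dot v u.
Proof. by apply: eq_bigr => x _; rewrite mulrC. Qed.

Lemma dot_lin (R : realFieldType) (X : finType) (c1 c2 : R) (u v w : X -> R) :
  dot (fun x => c1 * u x + c2 * v x) w = c1 * dot u w + c2 * dot v w.
Proof. rewrite /dot !mulr_sumr -big_split /=; apply: eq_bigr => x _; ring. Qed.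

Lemma dotDl (R : realFieldType) (X : finType) (c : R) (u v w : X -> R) :
  dot (fun x => u x + c * v x) w = dot u w + c * dot v w.
Proof. rewrite /dot !mulr_sumr -big_split /=; apply: eq_bigr => x _; ring. Qed.

Lemma dotDr (R : realFieldType) (X : finType) (c : R) (u v w : X -> R) :
  dot w (fun x => u x + c * v x) = dot w u + c * dot w v.
Proof. by rewrite dotC dotDl !(dotC w). Qed.

Lemma gordan (R : realFieldType) (X Rn : finType) (n : nat) :
  forall (J : {set Rn}) (a : Rn -> X -> R), #|J| = n ->
  (exists y, forall j, j \in J -> dot y (a j) < 0) \/
  (exists w : Rn -> R, [/\ (forall j, 0 <= w j), (forall j, j \notin J -> w j = 0),
     (exists j, w j != 0) & forall x, \sum_j w j * a j x = 0]).
Proof.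
elim: n => [|n IH] J a HJ.
  by left; exists (fun _ => 0) => j; rewrite (cards0_eq HJ) inE.
have [k kJ] : exists k, k \in J by apply/set0Pn; rewrite -card_gt0 HJ.
set J0 := J :\ k.
have HJ0 : #|J0| = n by have := cardsD1 k J; rewrite kJ HJ add1n => -[].
have kJ0 : k \notin J0 by rewrite !inE eqxx.
have J0J : forall j, j \in J0 -> j \in J by move=> j; rewrite !inE => /andP[].
have JJ0 : forall j, j \in J -> j != k -> j \in J0 by move=> j jJ jk; rewrite !inE jk.
case: (IH J0 a HJ0) => [[y Hy] | [w [w0 wJ wnz wS]]]; last first.
  right; exists w; split => // j jJ; apply: wJ; apply: contra jJ; exact: J0J.
case: (ltrP (dot y (a k)) 0) => [yk | yk].
  left; exists y => j jJ; case: (eqVneq j k) => [->|jk] //; exact: Hy (JJ0 _ jJ jk).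
set N := dot (a k) (a k).
have N0 : 0 <= N by apply: sumr_ge0 => x _; rewrite -expr2 sqr_ge0.
case: (eqVneq N 0) => [Nz | Nnz].
  have akz : forall x, a k x = 0.
    move=> x; move/eqP: Nz; rewrite /N /dot psumr_eq0; last by move=> i _; rewrite -expr2 sqr_ge0.
    move/allP => /(_ x (mem_index_enum x)) /=; rewrite mulf_eq0 orbb => /eqP //.
  right; exists (fun j => if j == k then 1 else 0); split.
  - by move=> j; case: (j == k).
  - by move=> j jJ; case: eqP => // ejk; rewrite ejk kJ in jJ.
  - by exists k; rewrite eqxx oner_neq0.
  - move=> x; rewrite (bigD1 k) //= eqxx mul1r big1 ?addr0 ?akz //.
    by move=> j /negbTE ->; rewrite mul0r.
have Npos : 0 < N by rewrite lt_neqAle eq_sym Nnz N0.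
pose a' := fun j x => a j x + (- (dot (a j) (a k) / N)) * a k x.
case: (IH J0 a' HJ0) => [[z Hz] | [w [w0 wJ [j0 wj0] wS]]].
- pose z' := fun x => z x + (- (dot z (a k) / N)) * a k x.
  have Hz' : forall j, dot z' (a j) = dot z (a' j).
    move=> j; rewrite /z' /a' dotDl dotDr (dotC (a k) (a j)); ring.
  have Hz'k : dot z' (a k) = 0 by rewrite dotDl -/N mulNr divfK // subrr.
  pose d := fun j => - dot z (a' j).
  pose M := 1 + \sum_(j in J0) `|dot (a k) (a j)| / d j.
  left; exists (fun x => M * z' x + (-1) * a k x) => j jJ.
  rewrite dot_lin.
  case: (eqVneq j k) => [->|jk].
    rewrite Hz'k -/N mulr0 add0r mulN1r oppr_lt0 //.
  have jJ0 := JJ0 _ jJ jk.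
  have dpos : 0 < d j by rewrite /d oppr_gt0; exact: Hz.
  have HM : `|dot (a k) (a j)| / d j <= M - 1.
    have : `|dot (a k) (a j)| / d j <= \sum_(i in J0) `|dot (a k) (a i)| / d i.
      rewrite (bigD1 j) //= lerDl; apply: sumr_ge0 => i /andP[iJ0 _].
      by rewrite divr_ge0 // ltW // /d oppr_gt0; exact: Hz.
    rewrite /M; lra.
  move: HM; rewrite ler_pdivrMr // mulrBl mul1r => HM.
  have := ler_norm (- dot (a k) (a j)); rewrite normrN => HA.
  rewrite Hz' (_ : dot z (a' j) = - d j); last by rewrite /d opprK.
  rewrite mulrN; lra.
- have Hw : forall x, \sum_j w j * a j x = (\sum_j w j * (dot (a j) (a k) / N)) * a k x.
    move=> x; move: (wS x).
    have -> : \sum_j w j * a' j x = \sum_j w j * a j x - (\sum_j w j * (dot (a j) (a k) / N)) * a k x.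
      rewrite mulr_suml -sumrB; apply: eq_bigr => j _; rewrite /a'; ring.
    by move/eqP; rewrite subr_eq0 => /eqP.
  set mu := \sum_j w j * (dot (a j) (a k) / N) in Hw.
  have j0J0 : j0 \in J0 by apply/negPn/negP => /wJ h; rewrite h eqxx in wj0.
  have S_lt : \sum_j w j * dot y (a j) < 0.
    rewrite (bigD1 j0) //=.
    have t0 : w j0 * dot y (a j0) < 0.
      by rewrite pmulr_rlt0 ?Hy // lt_neqAle eq_sym wj0 w0.
    have : \sum_(j | j != j0) w j * dot y (a j) <= 0.
      apply: sumr_le0 => j _; case: (boolP (j \in J0)) => jJ0.
        exact: mulr_ge0_le0 (w0 j) (ltW (Hy j jJ0)).
      by rewrite wJ // mul0r.
    lra.
  have S_eq : \sum_j w j * dot y (a j) = mu * dot y (a k).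
    transitivity (dot y (fun x => \sum_j w j * a j x)).
      rewrite /dot; under eq_bigr do rewrite mulr_sumr.
      rewrite exchange_big; apply: eq_bigr => x _; rewrite mulr_sumr.
      by apply: eq_bigr => j _; ring.
    rewrite /dot mulr_sumr; apply: eq_bigr => x _; rewrite Hw; ring.
  have mu0 : mu <= 0.
    rewrite leNgt; apply/negP => mupos.
    have := mulr_ge0 (ltW mupos) yk; rewrite -S_eq; lra.
  right; exists (fun j => w j + (if j == k then - mu else 0)); split.
  + move=> j; case: (j == k); rewrite ?addr0 // addr_ge0 // oppr_ge0 //.
  + move=> j jJ.
    have jk : j != k by apply: contraNneq jJ => ->.
    rewrite (negbTE jk) addr0 wJ //; apply: contra jJ; exact: J0J.
  + exists j0.
    have j0k : j0 != k by apply: contraTneq j0J0 => ->.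
    by rewrite (negbTE j0k) addr0.
  + move=> x; under eq_bigr do rewrite mulrDl.
    rewrite big_split /= Hw (bigD1 k) //= eqxx big1 ?addr0; first ring.
    by move=> j /negbTE ->; rewrite mul0r.
Qed.

Theorem theorem2 (R : realFieldType) (X Rn : finType) (sm sp : X -> Rn -> nat)
  (irr : {set Rn}) :
  reaction_network sm sp -> closed_RN sm sp -> mixed_RN sm sp irr ->
  (thermodynamically_sound sm sp R irr <->
   ~ exists v : Rn -> R, irreversible_futile_cycle sm sp irr v).
Proof.
move=> _ _ _; split.
- move=> [g [Hg Hirr]] [v [[[v0 [r vr]] vker] vsupp]].
  have : \sum_r g r * v r < 0.
    rewrite (bigD1 r) //=.
    have t0 : g r * v r < 0.
      by rewrite nmulr_rlt0 ?Hirr ?vsupp // lt_neqAle eq_sym vr v0.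
    have : \sum_(i | i != r) g i * v i <= 0.
      apply: sumr_le0 => i _; case: (eqVneq (v i) 0) => [->|vi]; first by rewrite mulr0.
      exact: mulr_le0_ge0 (ltW (Hirr _ (vsupp _ vi))) (v0 i).
    lra.
  by rewrite (Hg v vker) ltxx.
- move=> Hno.
  case: (@gordan R X Rn _ irr (fun r x => (stoich sm sp x r)%:~R) erefl)
    => [[y Hy] | [w [w0 wJ wnz wS]]].
  + exists (fun r => dot y (fun x => (stoich sm sp x r)%:~R)); split.
    * move=> v vker; rewrite /dot.
      under eq_bigr do rewrite mulr_suml.
      rewrite exchange_big big1 //= => x _.
      transitivity (y x * \sum_r (stoich sm sp x r)%:~R * v r).
        by rewrite mulr_sumr; apply: eq_bigr => r _; ring.
      by rewrite vker mulr0.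
    * by move=> r rirr; exact: Hy.
  + exfalso; apply: Hno; exists w; split; first split.
    * by split.
    * move=> x; rewrite -[RHS](wS x); apply: eq_bigr => r _; exact: mulrC.
    * by move=> r wr; apply/negPn/negP => /wJ h; rewrite h eqxx in wr.
Qed.
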